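(* Let $d\in\mathbb N$ and let $S$ be a semigroup with a completely simple ideal $K$. (1) If $S$ is $d$-solvable, then $S^{2^d}=K$ and all subgroups of $K$ are $d$-solvable. (2) If $S$ is left $d$-nilpotent or right $d$-nilpotent or $d$-supernilpotent, then $S^{d+1}=K$ and all subgroups of $K$ are $d$-nilpotent.
   Context: $S^m=\{a_1\cdots a_m: a_i\in S\}$. For an algebra $\mathbf A$ and congruences $\alpha_1,\dots,\alpha_n$, $M_{\mathbf A}(\alpha_1,\dots,\alpha_n)$ is the subalgebra of $\mathbf A^{\{0,1\}^n}$ generated by all $g$ such that for some $i$ and $(a,b)\in\alpha_i$, $g(x)=a$ if $x_i=0$ and $g(x)=b$ if $x_i=1$; $[\alpha_1,\dots,\alpha_n]$ is the smallest congruence $\delta$ such that for all $f\in M_{\mathbf A}(\alpha_1,\dots,\alpha_n)$: if $(f(x0),f(x1))\in\delta$ for all $x\in\{0,1\}^{n-1}\setminus\{(1,\dots,1)\}$ then $(f(1,\dots,1,0),f(1,\dots,1,1))\in\delta$. With $1$ total, $0$ trivial congruence: $[1]^0=1$, $[1]^{k+1}=[[1]^k,[1]^k]$; $(1]^1=1$, $(1]^{k+1}=[1,(1]^k]$; $[1)^1=1$, $[1)^{k+1}=[[1)^k,1]$. $d$-solvable: $[1]^d=0$; left $d$-nilpotent: $(1]^{d+1}=0$; right $d$-nilpotent: $[1)^{d+1}=0$; $d$-supernilpotent: the $(d+1)$-ary $[1,\dots,1]=0$. For groups, $d$-solvable and $d$-nilpotent are in the classical sense (derived length, resp. nilpotency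 class at most $d$). *)

(* Defs.v *)
From mathcomp Require Import all_boot.
Set Implicit Arguments.
Unset Strict Implicit.
Unset Printing Implicit Defensive.

(* Semigroups are given as a carrier S with a binary operation mul
   (associativity is a hypothesis of the theorem).  Relations and
   subsets are Prop-valued. *)

Section SemigroupDefs.
Variables (S : Type) (mul : S -> S -> S).

Definition srel := S -> S -> Prop.

Definition congruence (R : srel) : Prop :=
  [/\ (forall a, R a a),
      (forall a b, R a b -> R b a),
      (forall a b c, R a b -> R b c -> R a c) &
      (forall a b c d, R a b -> R c d -> R (mul a c) (mul b d))].

Definition total_rel : srel := fun _ _ => True.

Definition is_trivial (R : srel) : Prop := forall a b, R a b <-> a = b.

(* M_S(alpha_1,...,alpha_n): subalgebra of S^{{0,1}^n} generated by the
   elements g with g(x) = a if x_i = 0, g(x) = b if x_i = 1, (a,b) in alpha_i.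
   Elements of {0,1}^n are functions 'I_n -> bool (false = 0, true = 1).
   Since the only fundamental operation is mul, the generated subalgebra is
   the closure of the generators under pointwise multiplication. *)
Inductive Malg (n : nat) (alpha : 'I_n -> srel) : ((('I_n -> bool) -> S) -> Prop) :=
| Malg_gen (i : 'I_n) (a b : S) :
    alpha i a b -> Malg alpha (fun x => if x i then b else a)
| Malg_mul (f g : ('I_n -> bool) -> S) :
    Malg alpha f -> Malg alpha g -> Malg alpha (fun x => mul (f x) (g x)).

Definition setlast (n : nat) (x : 'I_n -> bool) (c : bool) : 'I_n -> bool :=
  fun j => if (val j).+1 == n then c else x j.

Definition term_cond (n : nat) (alpha : 'I_n -> srel) (delta : srel) : Prop :=
  forall f, Malg alpha f ->
    (forall x : 'I_n -> bool,
        (exists j : 'I_n, (val j).+1 < n /\ x j = false) ->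
        delta (f (setlast x false)) (f (setlast x true))) ->
    delta (f (setlast (fun _ => true) false)) (f (fun _ => true)).

Definition commutator (n : nat) (alpha : 'I_n -> srel) : srel :=
  fun a b => forall delta, congruence delta -> term_cond alpha delta -> delta a b.

Definition comm2 (alpha beta : srel) : srel :=
  commutator (fun i : 'I_2 => if val i == 0 then alpha else beta).

Fixpoint derived_cong (k : nat) : srel :=
  if k is k'.+1 then comm2 (derived_cong k') (derived_cong k') else total_rel.

(* left_cong k = (1]^(k+1) *)
Fixpoint left_cong (k : nat) : srel :=
  if k is k'.+1 then comm2 total_rel (left_cong k') else total_rel.

(* right_cong k = [1)^(k+1) *)
Fixpoint right_cong (k : nat) : srel :=
  if k is k'.+1 then comm2 (right_cong k') total_rel else total_rel.

Definition d_solvable (d : nat) : Prop := is_trivial (derived_cong d).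
Definition left_nilpotent (d : nat) : Prop := is_trivial (left_cong d).
Definition right_nilpotent (d : nat) : Prop := is_trivial (right_cong d).
Definition supernilpotent (d : nat) : Prop :=
  is_trivial (commutator (fun _ : 'I_d.+1 => total_rel)).

(* S^m = { a_1 ... a_m : a_i in S }  (for m >= 1; S^0 is taken empty) *)
Fixpoint spow (m : nat) : S -> Prop :=
  match m with
  | 0 => fun _ => False
  | 1 => fun _ => True
  | m'.+1 => fun x => exists a b, spow m' a /\ x = mul a b
  end.

Definition is_ideal (K : S -> Prop) : Prop :=
  (exists k, K k) /\ (forall s k, K k -> K (mul s k) /\ K (mul k s)).

Definition is_ideal_in (K J : S -> Prop) : Prop :=
  (forall x, J x -> K x) /\ (exists j, J j) /\
  (forall s j, K s -> J j -> J (mul s j) /\ J (mul j s)).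

Definition subsemigroup (K : S -> Prop) : Prop :=
  forall a b, K a -> K b -> K (mul a b).

Definition simple_in (K : S -> Prop) : Prop :=
  forall J, is_ideal_in K J -> forall x, K x -> J x.

Definition idempotent (e : S) : Prop := mul e e = e.

Definition primitive_in (K : S -> Prop) (e : S) : Prop :=
  K e /\ idempotent e /\
  forall f, K f -> idempotent f -> f = mul e f -> f = mul f e -> f = e.

Definition completely_simple (K : S -> Prop) : Prop :=
  subsemigroup K /\ (exists k, K k) /\ simple_in K /\ exists e, primitive_in K e.

Definition completely_simple_ideal (K : S -> Prop) : Prop :=
  is_ideal K /\ completely_simple K.

Definition is_subgroup (H : S -> Prop) (e : S) : Prop :=
  [/\ H e,
      (forall a b, H a -> H b -> H (mul a b)),
      (forall a, H a -> mul e a = a /\ mul a e = a) &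
      (forall a, H a -> exists ai, H ai /\ mul a ai = e /\ mul ai a = e)].

Inductive gcomm (H : S -> Prop) (e : S) (P Q : S -> Prop) : S -> Prop :=
| gcomm_e : gcomm H e P Q e
| gcomm_c (x y xi yi : S) : P x -> Q y -> H xi -> H yi ->
    mul x xi = e -> mul xi x = e -> mul y yi = e -> mul yi y = e ->
    gcomm H e P Q (mul (mul (mul xi yi) x) y)
| gcomm_m (a b : S) : gcomm H e P Q a -> gcomm H e P Q b -> gcomm H e P Q (mul a b).

Fixpoint derived_series (H : S -> Prop) (e : S) (k : nat) : S -> Prop :=
  if k is k'.+1 then gcomm H e (derived_series H e k') (derived_series H e k')
  else H.

(* lower central series: lcs k = gamma_(k+1)(H) *)
Fixpoint lcs (H : S -> Prop) (e : S) (k : nat) : S -> Prop :=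
  if k is k'.+1 then gcomm H e (lcs H e k') H else H.

Definition group_solvable (H : S -> Prop) (e : S) (d : nat) : Prop :=
  forall x, derived_series H e d x -> x = e.

Definition group_nilpotent (H : S -> Prop) (e : S) (d : nat) : Prop :=
  forall x, lcs H e d x -> x = e.

End SemigroupDefs.

(* Main.v *)
Require Import Defs.
From mathcomp Require Import all_boot.
Set Implicit Arguments.
Unset Strict Implicit.
Unset Printing Implicit Defensive.

Ltac closeH Hm := repeat (first [assumption | apply: (Hm)]).

Section Main.
Variables (S : Type) (mul : S -> S -> S) (mulA : associative mul).
Local Infix "**" := mul (at level 40, left associativity).

Lemma total_cong : congruence mul (@total_rel S).
Proof. by split. Qed.

Lemma commutator_cong n (alpha : 'I_n -> srel S) : congruence mul (commutator mul alpha).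
Proof.
split.
- by move=> a delta [Hr _ _ _] _.
- by move=> a b Hab delta Hc Ht; case: (Hc) => _ Hs _ _; apply: Hs; apply: Hab.
- by move=> a b c Hab Hbc delta Hc Ht; case: (Hc) => _ _ Htr _; apply: Htr (Hab _ Hc Ht) (Hbc _ Hc Ht).
- by move=> a b c d Hab Hcd delta Hc Ht; case: (Hc) => _ _ _ Hm; apply: Hm (Hab _ Hc Ht) (Hcd _ Hc Ht).
Qed.

Lemma derived_cong_cong k : congruence mul (derived_cong mul k).
Proof. case: k => [|k] /=; [exact: total_cong | exact: commutator_cong]. Qed.
Lemma left_cong_cong k : congruence mul (left_cong mul k).
Proof. case: k => [|k] /=; [exact: total_cong | exact: commutator_cong]. Qed.
Lemma right_cong_cong k : congruence mul (right_cong mul k).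
Proof. case: k => [|k] /=; [exact: total_cong | exact: commutator_cong]. Qed.

Definition i0 : 'I_2 := @Ordinal 2 0 isT.
Definition i1 : 'I_2 := @Ordinal 2 1 isT.

Lemma comm2_key (al be : srel S) p0 p1 q0 q1 :
  al p0 p1 -> be q0 q1 -> p0 ** q0 = p0 ** q1 ->
  comm2 mul al be (p1 ** q0) (p1 ** q1).
Proof.
move=> Hp Hq Heq delta Hc Ht.
case: (Hc) => Hr _ _ _.
pose f := fun x : 'I_2 -> bool => (if x i0 then p1 else p0) ** (if x i1 then q1 else q0).
have Hf : Malg mul (fun i : 'I_2 => if val i == 0 then al else be) f.
  apply: Malg_mul; first exact: (@Malg_gen _ mul 2 _ i0 p0 p1 Hp).
  exact: (@Malg_gen _ mul 2 _ i1 q0 q1 Hq).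
apply: (Ht f Hf) => x [j [Hj Hx]].
have Ej : j = i0 by apply: val_inj; move: Hj; rewrite /=; case: (val j).
rewrite Ej in Hx.
rewrite /f /setlast /=.
move: Hx; rewrite /i0 => ->; rewrite Heq; exact: Hr.
Qed.


Section Grp.
Variables (H : S -> Prop) (e : S).
Hypothesis (He : H e) (Hid : forall a, H a -> e ** a = a /\ a ** e = a).

Lemma idl a : H a -> e ** a = a. Proof. by case/Hid. Qed.
Lemma idr a : H a -> a ** e = a. Proof. by case/Hid. Qed.

Lemma gcommA (al be : srel S) x xi y yi :
  H x -> H xi -> H y -> H yi -> xi ** x = e -> yi ** y = e ->
  al e x -> al e xi -> be e y -> be e yi ->
  comm2 mul al be e (xi ** yi ** x ** y).
Proof.
move=> Hx Hxi Hy Hyi Ex Ey a1 a2 b1 b2 delta Hc Ht.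
case: (Hc) => Hr _ _ _.
pose f := fun w : 'I_2 -> bool => (if w i0 then xi else e) ** (if w i1 then yi else e)
   ** (if w i0 then x else e) ** (if w i1 then y else e).
have Hf : Malg mul (fun i : 'I_2 => if val i == 0 then al else be) f.
  apply: Malg_mul; last exact: (@Malg_gen _ mul 2 _ i1 e y b1).
  apply: Malg_mul; last exact: (@Malg_gen _ mul 2 _ i0 e x a1).
  apply: Malg_mul; first exact: (@Malg_gen _ mul 2 _ i0 e xi a2).
  exact: (@Malg_gen _ mul 2 _ i1 e yi b2).
have := Ht f Hf.
have E1 : f (setlast (fun _ => true) false) = e.
  by rewrite /f /setlast /= !idr // Ex.
rewrite E1; apply => w [j [Hj Hw]].
have Ej : j = i0 by apply: val_inj; move: Hj; rewrite /=; case: (val j).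
rewrite Ej in Hw.
rewrite /f /setlast /=.
move: Hw; rewrite /i0 => ->.
by rewrite !idl // !idr // Ey.
Qed.

Lemma gcommB (al be : srel S) x xi y yi :
  H x -> H xi -> H y -> H yi -> xi ** x = e -> yi ** y = e ->
  al e x -> al e xi -> be e y -> be e yi ->
  comm2 mul be al e (xi ** yi ** x ** y).
Proof.
move=> Hx Hxi Hy Hyi Ex Ey a1 a2 b1 b2 delta Hc Ht.
case: (Hc) => Hr _ _ _.
pose f := fun w : 'I_2 -> bool => (if w i1 then xi else e) ** (if w i0 then yi else e)
   ** (if w i1 then x else e) ** (if w i0 then y else e).
have Hf : Malg mul (fun i : 'I_2 => if val i == 0 then be else al) f.
  apply: Malg_mul; last exact: (@Malg_gen _ mul 2 _ i0 e y b1).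
  apply: Malg_mul; last exact: (@Malg_gen _ mul 2 _ i1 e x a1).
  apply: Malg_mul; first exact: (@Malg_gen _ mul 2 _ i1 e xi a2).
  exact: (@Malg_gen _ mul 2 _ i0 e yi b2).
have := Ht f Hf.
have E1 : f (setlast (fun _ => true) false) = e.
  by rewrite /f /setlast /= idl // idr // Ey.
rewrite E1; apply => w [j [Hj Hw]].
have Ej : j = i0 by apply: val_inj; move: Hj; rewrite /=; case: (val j).
rewrite Ej in Hw.
rewrite /f /setlast /=.
move: Hw; rewrite /i0 => ->.
case: (w i0); by rewrite ?idl // ?idr // ?Ex.
Qed.

End Grp.


Section KSec.
Variables (K : S -> Prop) (HK : completely_simple_ideal mul K).

Lemma Kl s k : K k -> K (s ** k).
Proof. by case: HK => [[_ H] _] /(H s) []. Qed.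
Lemma Kr s k : K k -> K (k ** s).
Proof. by case: HK => [[_ H] _] /(H s) []. Qed.
Lemma Kne : exists k, K k.
Proof. by case: HK => [[H _] _]. Qed.

Lemma Jfull c : K c -> forall a, K a -> exists u v, K u /\ K v /\ a = u ** c ** v.
Proof.
move=> Kc a Ka.
case: HK => _ [_ [_ [Hsimp _]]].
apply: (Hsimp (fun z => exists u v, K u /\ K v /\ z = u ** c ** v)) => //.
split; last split.
- by move=> z [u [v [Ku [Kv ->]]]]; apply: Kr; apply: Kr.
- by exists (c ** c ** c), c, c.
- move=> s j Ks [u [v [Ku [Kv ->]]]]; split.
  + by exists (s ** u), v; split; [exact: Kl|split=> //]; rewrite !mulA.
  + by exists u, (v ** s); split=> //; split; [exact: Kr|]; rewrite !mulA.
Qed.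

Lemma Lid a : K a -> exists g, K g /\ a ** g = a.
Proof.
move=> Ka.
case: (HK) => _ [_ [_ [_ [e0 [Ke0 [Hid Hprim]]]]]].
have {}Hid : e0 ** e0 = e0 := Hid.
have [u [v [Ku [Kv Ha]]]] := Jfull Ke0 Ka.
have [x [y [Kx [Ky Ex]]]] := Jfull Ka Ke0.
have ee : forall p, p ** e0 ** e0 = p ** e0 by move=> p; rewrite -mulA Hid.
have sr : forall p, p ** e0 ** x ** u ** e0 ** v ** y ** e0 = p ** e0.
  move=> p.
  have h : e0 ** (x ** (u ** e0 ** v) ** y) ** e0 = e0 by rewrite -Ha -Ex !Hid.
  by have := congr1 (mul p) h; rewrite !mulA => h'; exact h'.
pose f := e0 ** v ** y ** e0 ** x ** u ** e0.
have Kf : K f by rewrite /f; do 6 apply: Kr.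
have ff : f ** f = f by rewrite /f !mulA ee sr.
have f1 : f = e0 ** f by rewrite /f !mulA Hid.
have f2 : f = f ** e0 by rewrite /f ee.
have fe : f = e0 := Hprim f Kf ff f1 f2.
have rs : forall p, p ** e0 ** v ** y ** e0 ** x ** u ** e0 = p ** e0.
  by move=> p; have := congr1 (mul p) fe; rewrite /f !mulA => h'; exact h'.
exists (y ** e0 ** x ** u ** e0 ** v); split.
  by do 4 apply: Kr; apply: Kl.
by rewrite Ha !mulA rs.
Qed.

Lemma spowK n a : K a -> spow mul n.+1 a.
Proof.
move=> Ka; have [g [_ Hg]] := Lid Ka.
elim: n => [|n IH] //=.
by exists a, g.
Qed.

Lemma spow_split m n x : spow mul (m.+1 + n.+1) x ->
  exists y z, spow mul m.+1 y /\ spow mul n.+1 z /\ x = y ** z.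
Proof.
elim: n x => [|n IH] x.
  by rewrite addn1 /= => [[a [b [Ha ->]]]]; exists a, b.
rewrite addnS /= => [[a [b [Ha ->]]]].
have [y [z [Hy [Hz ->]]]] := IH a Ha.
exists y, (z ** b); split=> //; split; last by rewrite mulA.
by clear IH Ha; case: n Hz => [|n] Hz /=; exists z, b.
Qed.


Lemma solv_inv k x : spow mul (2 ^ k) x -> forall a, K a ->
  exists y, K y /\ derived_cong mul k x y /\ a ** x = a ** y.
Proof.
elim: k x => [|k IH] x.
  move=> _ a Ka; have [g [Kg Hg]] := Lid Ka.
  exists (g ** x); split; first exact: Kr.
  by split; [|rewrite mulA Hg].
have h : 2 ^ k.+1 = (2 ^ k).-1.+1 + (2 ^ k).-1.+1.
  by rewrite prednK ?expn_gt0 // expnS mul2n addnn.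
rewrite h => /spow_split [x1 [x2 [H1 [H2 ->]]]] a Ka.
rewrite prednK ?expn_gt0 // in H1 H2.
have [y1 [Ky1 [D1 E1]]] := IH x1 H1 a Ka.
have [y2 [Ky2 [D2 E2]]] := IH x2 H2 y1 Ky1.
exists (x1 ** y2); split; first exact: Kl.
split; last by rewrite !mulA E1 -!mulA E2.
have [_ Hs _ _] := derived_cong_cong k.
by apply: comm2_key (Hs _ _ D1) D2 E2.
Qed.

Lemma left_inv k x : spow mul k.+1 x -> forall a, K a ->
  exists y, K y /\ left_cong mul k x y /\ a ** x = a ** y.
Proof.
elim: k x => [|k IH] x.
  move=> _ a Ka; have [g [Kg Hg]] := Lid Ka.
  exists (g ** x); split; first exact: Kr.
  by split; [|rewrite mulA Hg].
move=> /(@spow_split 0 k) [x1 [x2 [H1 [H2 ->]]]] a Ka.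
have [y2 [Ky2 [D2 E2]]] := IH x2 H2 (a ** x1) (Kr _ Ka).
exists (x1 ** y2); split; first exact: Kl.
split; last by rewrite !mulA E2.
by apply: (@comm2_key _ _ (a ** x1)) => //; rewrite -!mulA.
Qed.

Lemma right_inv k x : spow mul k.+1 x -> exists y, K y /\ right_cong mul k x y.
Proof.
elim: k x => [|k IH] x.
  by move=> _; have [c Kc] := Kne; exists c.
move=> /= [a [b [Ha ->]]].
have [y1 [Ky1 D1]] := IH a Ha.
have [g [Kg Hg]] := Lid Ky1.
exists (a ** (g ** b)); split; first by apply: Kl; apply: Kr.
have [_ Hs _ _] := right_cong_cong k.
by apply: (comm2_key (Hs _ _ D1)) => //; rewrite mulA Hg.
Qed.

End KSec.

Section Grp2.
Variables (H : S -> Prop) (e : S) (Hsub : is_subgroup mul H e).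

Lemma gcomm_sub (P Q : S -> Prop) : (forall z, P z -> H z) -> (forall z, Q z -> H z) ->
  forall z, gcomm mul H e P Q z -> H z.
Proof.
case: Hsub => He Hm _ _ HP HQ z; elim => //.
- move=> x y xi yi Px Qy Hxi Hyi _ _ _ _.
  by apply: (Hm); [apply: (Hm); [apply: (Hm)|]|] => //; [apply: HP|apply: HQ].
- by move=> a b _ Ha _ Hb; apply: Hm.
Qed.

Lemma ds_sub k z : derived_series mul H e k z -> H z.
Proof. elim: k z => [|k IH] z //=; exact: gcomm_sub. Qed.

Lemma lcs_sub k z : lcs mul H e k z -> H z.
Proof. elim: k z => [|k IH] z //=; apply: gcomm_sub => //. Qed.

Lemma inv_rel (R : srel S) x xi : congruence mul R -> H x -> H xi -> xi ** x = e ->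
   R e x -> R e xi.
Proof.
case: Hsub => He _ Hid _ [Hr Hs _ Hm] Hx Hxi Ex Rx.
have := Hm _ _ _ _ (Hr xi) Rx; rewrite Ex (idr Hid) // => h; exact: Hs.
Qed.

Lemma ds_rel k z : derived_series mul H e k z -> derived_cong mul k e z.
Proof.
case: (Hsub) => He Hm Hid _.
elim: k z => [|k IH] z //=.
have [Hr Hs Ht Hmc] := derived_cong_cong k.
elim.
- by move=> delta [Hr' _ _ _] _; exact: Hr'.
- move=> x y xi yi Px Qy Hxi Hyi E1 E2 E3 E4.
  have Hx := ds_sub Px; have Hy := ds_sub Qy.
  apply: (@gcommA H e He Hid) => //; try exact: IH.
  + exact: (inv_rel (derived_cong_cong k) Hx Hxi E2 (IH _ Px)).
  + exact: (inv_rel (derived_cong_cong k) Hy Hyi E4 (IH _ Qy)).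
- move=> a b _ Ha _ Hb.
  have [_ _ _ Hmm] := commutator_cong (fun i : 'I_2 => if val i == 0 then derived_cong mul k else derived_cong mul k).
  by have := Hmm _ _ _ _ Ha Hb; rewrite (idl Hid).
Qed.

Lemma lcs_left k z : lcs mul H e k z -> left_cong mul k e z.
Proof.
case: (Hsub) => He Hm Hid _.
elim: k z => [|k IH] z //=.
elim.
- by move=> delta [Hr' _ _ _] _; exact: Hr'.
- move=> x y xi yi Px Qy Hxi Hyi E1 E2 E3 E4.
  have Hx := lcs_sub Px.
  apply: (@gcommB H e He Hid) => //; try exact: IH.
  exact: (inv_rel (left_cong_cong k) Hx Hxi E2 (IH _ Px)).
- move=> a b _ Ha _ Hb.
  have [_ _ _ Hmm] := commutator_cong (fun i : 'I_2 => if val i == 0 then @total_rel S else left_cong mul k).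
  by have := Hmm _ _ _ _ Ha Hb; rewrite (idl Hid).
Qed.

Lemma lcs_right k z : lcs mul H e k z -> right_cong mul k e z.
Proof.
case: (Hsub) => He Hm Hid _.
elim: k z => [|k IH] z //=.
elim.
- by move=> delta [Hr' _ _ _] _; exact: Hr'.
- move=> x y xi yi Px Qy Hxi Hyi E1 E2 E3 E4.
  have Hx := lcs_sub Px.
  apply: (@gcommA H e He Hid) => //; try exact: IH.
  exact: (inv_rel (right_cong_cong k) Hx Hxi E2 (IH _ Px)).
- move=> a b _ Ha _ Hb.
  have [_ _ _ Hmm] := commutator_cong (fun i : 'I_2 => if val i == 0 then right_cong mul k else @total_rel S).
  by have := Hmm _ _ _ _ Ha Hb; rewrite (idl Hid).
Qed.

End Grp2.

Fixpoint lprod (z : nat -> S) m := if m is m'.+1 then lprod z m' ** z m else z 0.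

Lemma lprod_ext z z' m : (forall i, i <= m -> z i = z' i) -> lprod z m = lprod z' m.
Proof.
elim: m => [|m IH] H /=; first by rewrite H.
by rewrite IH ?H // => i Hi; apply: H; apply: leqW.
Qed.

Lemma spow_lprod m x : spow mul m.+1 x -> exists z, x = lprod z m.
Proof.
elim: m x => [|m IH] x.
  by move=> _; exists (fun _ => x).
move=> /= [a [b [Ha ->]]].
have [z Hz] := IH a Ha.
exists (fun i => if i == m.+1 then b else z i) => /=.
rewrite eqxx Hz; congr (_ ** _); apply: lprod_ext => i Hi.
by rewrite ifN // neq_ltn ltnS Hi.
Qed.

Section Super.
Variables (n : nat) (z : nat -> S) (c : S).

Fixpoint Wf m := if m is m'.+1 then Wf m' ** z m else c.
Definition Gf m (w : 'I_n.+1 -> bool) := if w (inord m) then z m else Wf m.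
Fixpoint Pf m (w : 'I_n.+1 -> bool) := if m is m'.+1 then Pf m' w ** Gf m w else Gf 0 w.

Lemma Pf_malg m : Malg mul (fun _ : 'I_n.+1 => @total_rel S) (Pf m).
Proof.
elim: m => [|m IH].
  exact: (@Malg_gen _ mul _ (fun _ : 'I_n.+1 => @total_rel S) (inord 0) (Wf 0) (z 0) I).
apply: Malg_mul => //.
exact: (@Malg_gen _ mul _ (fun _ : 'I_n.+1 => @total_rel S) (inord m.+1) (Wf m.+1) (z m.+1) I).
Qed.

Lemma Pf_true m : Pf m (fun _ => true) = lprod z m.
Proof. by elim: m => [|m IH] //=; rewrite IH. Qed.

Lemma Pf_dep m w w' : m <= n -> (forall j : 'I_n.+1, val j <= m -> w j = w' j) ->
  Pf m w = Pf m w'.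
Proof.
elim: m => [|m IH] Hm Hw /=.
  by rewrite /Gf Hw // /= inordK.
rewrite IH ?(ltnW Hm) //; last by move=> j Hj; apply: Hw; apply: leqW.
by rewrite /Gf Hw // /= inordK.
Qed.

Lemma Pf_inv m w : m <= n -> (exists j : 'I_n.+1, val j <= m /\ w j = false) ->
  Pf m w = Wf m \/ exists Q, Pf m w = Q ** Wf m.
Proof.
elim: m => [|m IH] Hm [j [Hj Hw]] /=.
  have Ej : j = inord 0 by apply: val_inj; rewrite /= inordK //; apply/eqP; rewrite -leqn0.
  by left; rewrite /Gf -Ej Hw.
case Hwm : (w (inord m.+1)).
  have Hj' : val j <= m.
    rewrite leq_eqVlt in Hj; case/orP: Hj => // /eqP Hj.
    suff : j = inord m.+1 by move=> E; rewrite -E Hw in Hwm.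
    by apply: val_inj; rewrite /= inordK.
  case: (IH (ltnW Hm)); first by exists j.
    by move=> ->; left; rewrite /Gf Hwm.
  by move=> [Q ->]; right; exists Q; rewrite /Gf Hwm -mulA.
by right; exists (Pf m w); rewrite /Gf Hwm.
Qed.

End Super.

Section SG.
Variables (H : S -> Prop) (e : S) (Hsub : is_subgroup mul H e) (n : nat).

Lemma grp_comm_inv a ai b bi : H a -> H ai -> H b -> H bi ->
  a ** ai = e -> ai ** a = e -> b ** bi = e -> bi ** b = e ->
  (ai ** bi ** a ** b) ** (bi ** ai ** b ** a) = e /\
  (bi ** ai ** b ** a) ** (ai ** bi ** a ** b) = e.
Proof.
case: Hsub => He Hm Hid _ Ha Hai Hb Hbi E1 E2 E3 E4.
have cl : forall x y t, x ** y = e -> H t -> x ** (y ** t) = t.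
  by move=> x y t E Ht; rewrite mulA E (idl Hid).
split; rewrite -!mulA.
- rewrite (cl b bi); last 1 [by []|by closeH Hm].
  rewrite (cl a ai); last 1 [by []|by closeH Hm].
  by rewrite (cl bi b).
- rewrite (cl a ai); last 1 [by []|by closeH Hm].
  rewrite (cl b bi); last 1 [by []|by closeH Hm].
  by rewrite (cl ai a).
Qed.

Lemma super_grp k u : k < n -> lcs mul H e k u ->
  exists T Ti, Malg mul (fun _ : 'I_n => @total_rel S) T /\
    Malg mul (fun _ : 'I_n => @total_rel S) Ti /\
    (forall w, H (T w) /\ H (Ti w) /\ T w ** Ti w = e /\ Ti w ** T w = e) /\
    (forall w, (exists j : 'I_n, val j <= k /\ w j = false) -> T w = e) /\
    T (fun _ => true) = u.
Proof.
case: (Hsub) => He Hm Hid Hinv.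
elim: k u => [|k IH] u Hk.
  move=> /= Hu; have [ui [Hui [E1 E2]]] := Hinv u Hu.
  pose i := Ordinal Hk.
  exists (fun w => if w i then u else e), (fun w => if w i then ui else e).
  split; first exact: (@Malg_gen _ mul _ (fun _ : 'I_n => @total_rel S) i e u I).
  split; first exact: (@Malg_gen _ mul _ (fun _ : 'I_n => @total_rel S) i e ui I).
  split; first by move=> w; case: (w i); rewrite ?(idl Hid) //.
  split=> // w [j [Hj Hw]].
  have -> : i = j by apply: val_inj; apply/eqP; rewrite eq_sym -leqn0.
  by rewrite Hw.
move=> /=; elim.
- pose i := Ordinal Hk.
  exists (fun w => if w i then e else e), (fun w => if w i then e else e).
  split; first exact: (@Malg_gen _ mul _ (fun _ : 'I_n => @total_rel S) i e e I).
  split; first exact: (@Malg_gen _ mul _ (fun _ : 'I_n => @total_rel S) i e e I).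
  split; first by move=> w; case: (w i); rewrite ?(idl Hid).
  by split=> // w _; case: (w i).
- move=> x y xi yi Px Hy Hxi Hyi E1 E2 E3 E4.
  have [Tx [Tix [Mx [Mix [Px' [Zx Tx1]]]]]] := IH x (ltnW Hk) Px.
  pose iy := Ordinal Hk.
  pose Gy := fun w : 'I_n -> bool => if w iy then y else e.
  pose Gyi := fun w : 'I_n -> bool => if w iy then yi else e.
  have MGy : Malg mul (fun _ : 'I_n => @total_rel S) Gy
    := (@Malg_gen _ mul _ (fun _ : 'I_n => @total_rel S) iy e y I).
  have MGyi : Malg mul (fun _ : 'I_n => @total_rel S) Gyi
    := (@Malg_gen _ mul _ (fun _ : 'I_n => @total_rel S) iy e yi I).
  have PG : forall w, [/\ H (Gy w), H (Gyi w), Gy w ** Gyi w = e & Gyi w ** Gy w = e].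
    by move=> w; rewrite /Gy /Gyi; case: (w iy); split; rewrite ?(idl Hid).
  exists (fun w => Tix w ** Gyi w ** Tx w ** Gy w),
         (fun w => Gyi w ** Tix w ** Gy w ** Tx w).
  split; first by do 3 apply: Malg_mul => //.
  split; first by do 3 apply: Malg_mul => //.
  split.
    move=> w; have [Ha [Hai [Ea Eai]]] := Px' w; have [Hb Hbi Eb Ebi] := PG w.
    have [C1 C2] := grp_comm_inv Ha Hai Hb Hbi Ea Eai Eb Ebi.
    by split; [closeH Hm|split; [closeH Hm|split]].
  split.
    move=> w [j [Hj Hw]].
    have [Ha [Hai [Ea Eai]]] := Px' w; have [Hb Hbi Eb Ebi] := PG w.
    rewrite leq_eqVlt ltnS in Hj; case/orP: Hj => Hj.
      have Ej : j = iy by apply: val_inj; apply/eqP.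
      have -> : Gy w = e by rewrite /Gy -Ej Hw.
      have -> : Gyi w = e by rewrite /Gyi -Ej Hw.
      by rewrite (idr Hid (a:=Tix w)) // (idr Hid (a:=Tix w ** Tx w)) ?Eai //; apply: (Hm).
    have Z1 : Tx w = e by apply: Zx; exists j.
    have Z2 : Tix w = e by rewrite -Eai Z1 (idr Hid).
    by rewrite Z1 Z2 (idl Hid (a:=Gyi w)) // (idr Hid (a:=Gyi w)) // Ebi.
  have [Ha [Hai [Ea Eai]]] := Px' (fun _ => true).
  have Ti1 : Tix (fun _ => true) = xi.
    by rewrite -[Tix _](idr Hid) // -E1 -Tx1 mulA Eai (idl Hid).
  by rewrite Ti1 Tx1.
- move=> a b _ [Ta [Tia [Ma [Mia [Pa [Za Ta1]]]]]] _ [Tb [Tib [Mb [Mib [Pb [Zb Tb1]]]]]].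
  exists (fun w => Ta w ** Tb w), (fun w => Tib w ** Tia w).
  split; first exact: Malg_mul.
  split; first exact: Malg_mul.
  split.
    move=> w; have [H1 [H2 [E1 E2]]] := Pa w; have [H3 [H4 [E3 E4]]] := Pb w.
    split; first exact: Hm.
    split; first exact: Hm.
    split.
      by rewrite -mulA (mulA (Tb w)) E3 (idl Hid) // E1.
    by rewrite -mulA (mulA (Tia w)) E2 (idl Hid) // E4.
  split; last by rewrite Ta1 Tb1.
  by move=> w Hw; rewrite Za // Zb // (idl Hid).
Qed.

End SG.

Lemma super_grp_final (H : S -> Prop) e d : is_subgroup mul H e -> supernilpotent mul d ->
  forall u, lcs mul H e d u -> u = e.
Proof.
move=> Hsub Hsn u Hu.
have [T [Ti [MT [_ [_ [ZT T1]]]]]] := @super_grp H e Hsub d.+1 d u (ltnSn d) Hu.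
suff: commutator mul (fun _ : 'I_d.+1 => @total_rel S) e u by move/Hsn.
move=> delta [Hr _ _ _] Ht.
have E1 : T (setlast (fun _ => true) false) = e.
  by apply: ZT; exists ord_max; split => //; rewrite /setlast /= eqxx.
have := Ht T MT; rewrite E1 T1; apply.
move=> w [j [Hj Hw]].
have Hs : forall b, setlast w b j = false by move=> b; rewrite /setlast ifN // neq_ltn Hj.
by rewrite !ZT //; exists j; split=> //; rewrite /= -ltnS ltn_ord.
Qed.

Section K2.
Variables (K : S -> Prop) (HK : completely_simple_ideal mul K).

Lemma Wf_K z c m : K c -> K (Wf z c m).
Proof. by move=> Kc; elim: m => [|m IH] //=; apply: Kr. Qed.

Lemma super_sg d x : supernilpotent mul d -> spow mul d.+1 x -> K x.
Proof.
case: d => [|d'] Hsn Hx.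
  have [c Kc] := Kne HK.
  suff: commutator mul (fun _ : 'I_1 => @total_rel S) c x by move/Hsn => <-.
  move=> delta [Hr _ _ _] Ht.
  have := Ht (fun w => if w ord0 then x else c)
     (@Malg_gen _ mul _ (fun _ : 'I_1 => @total_rel S) ord0 c x I).
  rewrite /setlast /=; apply.
  by move=> w [j [Hj _]].
have [z Ez] := spow_lprod Hx.
have [c Kc] := Kne HK.
have KB : K (Wf z c d') by exact: Wf_K.
have [g [Kg Hg]] := Lid HK KB.
pose f := fun w : 'I_d'.+2 -> bool => @Pf d'.+1 z c d' w **
   (if w (inord d'.+1) then z d'.+1 else g ** z d'.+1).
have Hf : Malg mul (fun _ : 'I_d'.+2 => @total_rel S) f.
  apply: Malg_mul; first exact: Pf_malg.
  exact: (@Malg_gen _ mul _ (fun _ : 'I_d'.+2 => @total_rel S) (inord d'.+1) (g ** z d'.+1) (z d'.+1) I).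
suff: commutator mul (fun _ : 'I_d'.+2 => @total_rel S) (lprod z d' ** (g ** z d'.+1)) x.
  by move/Hsn => <-; apply: (Kl HK); apply: (Kr HK).
move=> delta [Hr _ _ _] Ht.
have Hd : forall w b, @Pf d'.+1 z c d' (setlast w b) = @Pf d'.+1 z c d' w.
  move=> w b; apply: Pf_dep => // j Hj.
  by rewrite /setlast ifN // neq_ltn ltnS ltnS Hj.
have Hl : forall (w : 'I_d'.+2 -> bool) b, setlast w b (inord d'.+1) = b.
  by move=> w b; rewrite /setlast /= inordK // eqxx.
have E1 : f (setlast (fun _ => true) false) = lprod z d' ** (g ** z d'.+1).
  by rewrite /f Hd Hl Pf_true.
have E2 : f (fun _ => true) = x by rewrite /f Pf_true Ez.
have := Ht f Hf; rewrite E1 E2; apply.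
move=> w [j [Hj Hw]].
rewrite /f !Hd !Hl.
have Hj' : val j <= d' by rewrite -ltnS -ltnS.
case: (@Pf_inv d'.+1 z c d' w (leqnSn _)); first by exists j.
  by move=> ->; rewrite mulA Hg; exact: Hr.
by move=> [Q ->]; rewrite -(mulA Q) (mulA _ g) Hg mulA; exact: Hr.
Qed.

End K2.

End Main.

Theorem lemma3p1 (S : Type) (mul : S -> S -> S) (mulA : associative mul)
  (d : nat) (K : S -> Prop) (HK : completely_simple_ideal mul K) :
  (d_solvable mul d ->
     (forall x, spow mul (2 ^ d) x <-> K x) /\
     (forall (H : S -> Prop) (e : S), is_subgroup mul H e ->
        (forall x, H x -> K x) -> group_solvable mul H e d)) /\
  (left_nilpotent mul d \/ right_nilpotent mul d \/ supernilpotent mul d ->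
     (forall x, spow mul d.+1 x <-> K x) /\
     (forall (H : S -> Prop) (e : S), is_subgroup mul H e ->
        (forall x, H x -> K x) -> group_nilpotent mul H e d)).
Proof.
have [c Kc] := Kne HK.
split.
  move=> Hsolv; split.
    move=> x; split.
      move=> Hx; have [y [Ky [D _]]] := solv_inv mulA HK Hx Kc.
      by have := (Hsolv x y).1 D => ->.
    by move=> Kx; rewrite -(prednK (expn_gt0 2 d)); exact: (spowK mulA HK).
  move=> H e Hsub _ x Hx.
  have := ds_rel Hsub Hx; move/Hsolv => ->; done.
move=> Hn; split.
  move=> x; split; last by move=> Kx; apply: (spowK mulA HK).
  case: Hn => [Hl|[Hr|Hs]] Hx.
  - have [y [Ky [D _]]] := left_inv mulA HK Hx Kc.
    by have := (Hl x y).1 D => ->.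
  - have [y [Ky D]] := right_inv mulA HK Hx.
    by have := (Hr x y).1 D => ->.
  - exact: super_sg Hs Hx.
move=> H e Hsub _ x Hx.
case: Hn => [Hl|[Hr|Hs]].
- by have := lcs_left Hsub Hx; move/Hl.
- by have := lcs_right Hsub Hx; move/Hr.
- exact: super_grp_final Hsub Hs x Hx.
Qed.
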